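(* Let $\mathfrak{g}$ be the real Lie algebra whose dual has a basis $e^1,\dots,e^6$ with $de^1=de^2=de^3=de^4=0$, $de^5=e^1\wedge e^3+e^4\wedge e^2$, $de^6=e^1\wedge e^4+e^2\wedge e^3$. Let $\omega^1=e^1+ie^2$, $\omega^2=e^3+ie^4$, $\omega^3=e^5+ie^6$, and let $J_1$ be the complex structure on $\mathfrak{g}$ whose space of $(1,0)$-forms is $\langle\omega^1,\overline{\omega^2},\overline{\omega^3}\rangle$. Then the element $\theta\in\mathrm{Hom}(\Lambda^{1,0},\Lambda^{0,1})$ defined by $\theta(\omega^1)=\omega^3$, $\theta(\overline{\omega^2})=0$, $\theta(\overline{\omega^3})=0$ satisfies $\bar\partial\theta=0$, but $\theta$ is not tangent to $\mathcal{C}(\mathfrak{g})$ at $J_1$ (there is no differentiable path in $\mathcal{C}(\mathfrak{g})$ through $J_1$ with tangent vector $\theta$).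
   Context: $\mathcal{C}(\mathfrak{g})$ is the set of complex structures on $\mathfrak{g}$, i.e. linear $J$ with $J^2=-1$ and $[JX,JY]=[X,Y]+J[JX,Y]+J[X,JY]$; $d\alpha(X,Y)=-\alpha([X,Y])$ extended complex-linearly. Relative to $J_1$, $\Lambda^{1,0}=\langle\omega^1,\overline{\omega^2},\overline{\omega^3}\rangle$ and $\Lambda^{0,1}=\overline{\Lambda^{1,0}}$. Each complex structure $J$ is identified with its space of $(1,0)$-forms, a point of the Grassmannian of complex $3$-planes in $\mathfrak{g}^*_{\mathbb{C}}$; tangent vectors at $J$ are identified with $\mathrm{Hom}(\Lambda^{1,0},\Lambda^{0,1})$ via: if $\{\eta^1,\eta^2,\eta^3\}$ is a basis of $\Lambda^{1,0}$ and $\tau^i(t)\in\Lambda^{1,0}$ with $\tau^i(0)=0$, $\dot\tau^i(0)=\sigma^i$, the path $\langle\eta^i+\overline{\tau^i(t)}\rangle$ has tangent vector $\eta^i\mapsto\overline{\sigma^i}$. For $\theta\in\mathrm{Hom}(\Lambda^{1,0},\Lambda^{0,1})$, $(\bar\partial\theta)(\eta)=\bar\partial(\theta\eta)-\theta(\bar\partial\eta)$, where $\bar\partial$ of a $(1,0)$-form is the $(1,1)$-component of its $d$, $\bar\partial$ of a $(0,1)$-form is the $(0,2)$-component of its $d$, and $\theta(\alpha\wedge\bar\beta)=\theta(\alpha)\wedge\bar\beta$ for $\alpha\in\Lambda^{1,0},\bar\beta\in\Lambda^{0,1}$. *)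

(* Defs.v *)
From HB Require Import structures.
From mathcomp Require Import all_boot all_order all_algebra.
From mathcomp Require Import all_classical all_reals all_analysis.
From mathcomp Require Import complex.
Set Implicit Arguments.
Unset Strict Implicit.
Unset Printing Implicit Defensive.
Import Order.TTheory GRing.Theory Num.Theory.
Local Open Scope ring_scope.

(*  Vectors of g (or g_C) are column vectors 'cV[K]_6 of coordinates in    *)
(*  the basis e_1..e_6 dual to e^1..e^6; 1-forms are row vectors 'rV[K]_6  *)
(*  of coordinates in e^1..e^6, alpha(X) = (alpha *m X) 0 0.               *)
(*  2-forms are 6x6 matrices beta with beta(X,Y) = (X^T *m beta *m Y) 0 0. *)
(*  (a /\ b)(X,Y) = a(X) b(Y) - a(Y) b(X).                                 *)

Definition ef (K : nzRingType) (n : nat) : 'rV[K]_6 := delta_mx 0 (inord n.-1).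

Definition wedge (K : comNzRingType) (a b : 'rV[K]_6) : 'M[K]_6 :=
  a^T *m b - b^T *m a.

Definition de (K : comNzRingType) (n : nat) : 'M[K]_6 :=
  if n == 5%N then wedge (ef K 1) (ef K 3) + wedge (ef K 4) (ef K 2)
  else if n == 6%N then wedge (ef K 1) (ef K 4) + wedge (ef K 2) (ef K 3)
  else 0.

(* The Lie bracket of g (and of its complexification), determined by
   d alpha (X,Y) = - alpha([X,Y]):   e^k([X,Y]) = - de^k(X,Y). *)
Definition brk (K : comNzRingType) (X Y : 'cV[K]_6) : 'cV[K]_6 :=
  \col_(k < 6) - (X^T *m de K k.+1 *m Y) 0 0.

Definition d1 (K : comNzRingType) (a : 'rV[K]_6) : 'M[K]_6 :=
  \matrix_(i < 6, j < 6) - (a *m brk (delta_mx i 0) (delta_mx j 0)) 0 0.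

Definition is_complex_structure (R : realType) (J : 'M[R]_6) : Prop :=
  J *m J = - 1%:M /\
  forall X Y : 'cV[R]_6,
    brk (J *m X) (J *m Y) = brk X Y + J *m brk (J *m X) Y + J *m brk X (J *m Y).

Definition iC (R : realType) : R[i] := Complex 0 1.
Definition toC (R : realType) (x : R) : R[i] := Complex x 0.

Definition is_form10 (R : realType) (J : 'M[R]_6) (a : 'rV[R[i]]_6) : bool :=
  a *m map_mx (@toC R) J == iC R *: a.

Definition conjf (R : realType) m n (a : 'M[R[i]]_(m, n)) : 'M[R[i]]_(m, n) :=
  map_mx (@conjc R) a.

Definition om1 (R : realType) : 'rV[R[i]]_6 := ef _ 1 + iC R *: ef _ 2.
Definition om2 (R : realType) : 'rV[R[i]]_6 := ef _ 3 + iC R *: ef _ 4.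
Definition om3 (R : realType) : 'rV[R[i]]_6 := ef _ 5 + iC R *: ef _ 6.

(* basis eta^1, eta^2, eta^3 = omega^1, conj omega^2, conj omega^3 of
   Lambda^{1,0} of J_1 *)
Definition eta (R : realType) (i : 'I_3) : 'rV[R[i]]_6 :=
  if (i : nat) == 0%N then om1 R
  else if (i : nat) == 1%N then conjf (om2 R) else conjf (om3 R).

Definition B10 (R : realType) : 'M[R[i]]_(3, 6) := \matrix_(i < 3) eta R i.
Definition B01 (R : realType) : 'M[R[i]]_(3, 6) := conjf (B10 R).

(* projections (acting on forms by right multiplication) of
   g*_C = Lambda^{1,0} (+) Lambda^{0,1} onto each summand *)
Definition P10 (R : realType) : 'M[R[i]]_6 := proj_mx <<B10 R>>%MS <<B01 R>>%MS.
Definition P01 (R : realType) : 'M[R[i]]_6 := proj_mx <<B01 R>>%MS <<B10 R>>%MS.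

Definition comp11 (R : realType) (g : 'M[R[i]]_6) : 'M[R[i]]_6 :=
  (P10 R)^T *m g *m P01 R + (P01 R)^T *m g *m P10 R.
Definition comp02 (R : realType) (g : 'M[R[i]]_6) : 'M[R[i]]_6 :=
  (P01 R)^T *m g *m P01 R.

Definition dbar10 (R : realType) (a : 'rV[R[i]]_6) := comp11 (d1 a).
Definition dbar01 (R : realType) (b : 'rV[R[i]]_6) := comp02 (d1 b).

(* An element of Hom(Lambda^{1,0}, Lambda^{0,1}) given by the images
   th i = theta(eta^i) of the basis; thmx th is the matrix of the linear
   map alpha |-> theta(alpha P10) on all of g*_C (right multiplication),
   which agrees with theta on Lambda^{1,0}. *)
Definition thmx (R : realType) (th : 'I_3 -> 'rV[R[i]]_6) : 'M[R[i]]_6 :=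
  P10 R *m pinvmx (B10 R) *m \matrix_(i < 3) th i.

(* extension of theta to Lambda^{1,1} = Lambda^{1,0} (x) Lambda^{0,1}:
   theta(alpha /\ conj beta) = theta(alpha) /\ conj beta *)
Definition theta11 (R : realType) (th : 'I_3 -> 'rV[R[i]]_6) (g : 'M[R[i]]_6) :=
  (thmx th)^T *m ((P10 R)^T *m g *m P01 R) + ((P01 R)^T *m g *m P10 R) *m thmx th.

Definition dbar_hom (R : realType) (th : 'I_3 -> 'rV[R[i]]_6) (a : 'rV[R[i]]_6) :=
  dbar01 (a *m thmx th) - theta11 th (dbar10 a).

(* th (as an element of Hom(Lambda^{1,0},Lambda^{0,1}), th i = theta(eta^i))
   is tangent to C(g) at J_1: there is a path t |-> J t in C(g), defined for
   |t| < eps, whose space of (1,0)-forms is spanned by eta^i + conj(tau^i(t))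
   with tau^i(t) in Lambda^{1,0}, tau^i(0) = 0, tau^i differentiable at 0 with
   derivative sigma^i, and conj(sigma^i) = theta(eta^i). *)
Definition tangent_at_J1 (R : realType) (th : 'I_3 -> 'rV[R[i]]_6) : Prop :=
  exists (eps : R) (J : R -> 'M[R]_6) (tau : 'I_3 -> R -> 'rV[R[i]]_6)
         (sigma : 'I_3 -> 'rV[R[i]]_6),
    [/\ 0 < eps,
        forall i, tau i 0 = 0,
        forall i (t : R), `|t| < eps -> (tau i t <= B10 R)%MS &
        forall i (k : 'I_6),
          is_derive (0 : R) (1 : R) (fun t => complex.Re (tau i t 0 k))
                    (complex.Re (sigma i 0 k)) /\
          is_derive (0 : R) (1 : R) (fun t => complex.Im (tau i t 0 k))
                    (complex.Im (sigma i 0 k))] /\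
    (forall t : R, `|t| < eps ->
          is_complex_structure (J t) /\
          forall a : 'rV[R[i]]_6,
            is_form10 (J t) a = (a <= \matrix_(i < 3) (eta R i + conjf (tau i t)))%MS) /\
    (forall i, conjf (sigma i) = th i).

Definition theta0 (R : realType) (i : 'I_3) : 'rV[R[i]]_6 :=
  if (i : nat) == 0%N then om3 R else 0.

(* Main.v *)
Require Import Defs.
From HB Require Import structures.
From mathcomp Require Import all_boot all_order all_algebra.
From mathcomp Require Import all_classical all_reals all_analysis.
From mathcomp Require Import complex.
From mathcomp Require Import ring lra zify.
Import Order.TTheory GRing.Theory Num.Theory.
Local Open Scope ring_scope.


Lemma efE (K : nzRingType) n k : (1 <= n <= 6)%N -> ef K n 0 k = (k == n.-1 :> nat)%:R.
Proof. move=> h; have h' : (n.-1 < 6)%N by lia.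
rewrite /ef mxE /= -(inj_eq val_inj) /= inordK //. Qed.

Section Gen.
Variable K : comNzRingType.

Lemma scE m n (c : K) (A : 'M[K]_(m, n)) i j : (c *: A) i j = c * A i j.
Proof. by rewrite mxE. Qed.
Lemma adE m n (A B : 'M[K]_(m, n)) i j : (A + B) i j = A i j + B i j.
Proof. by rewrite mxE. Qed.

Lemma tw n (P Q : 'M[K]_(6, n)) (a b : 'rV[K]_6) :
  P^T *m wedge a b *m Q = (a *m P)^T *m (b *m Q) - (b *m P)^T *m (a *m Q).
Proof. by rewrite /wedge mulmxBr mulmxBl !trmx_mul !mulmxA. Qed.

Lemma wedge_mul n (T : 'M[K]_(6, n)) (a b : 'rV[K]_6) :
  wedge a b *m T = a^T *m (b *m T) - b^T *m (a *m T).
Proof. by rewrite /wedge mulmxBl !mulmxA. Qed.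

Lemma wedgeE (a b : 'rV[K]_6) i j : wedge a b i j = a 0 i * b 0 j - b 0 i * a 0 j.
Proof. by rewrite /wedge !mxE !big_ord1 !mxE. Qed.

Lemma dquad m n (D : 'M[K]_(m, n)) i j :
  ((delta_mx 0 i : 'M[K]_(1, m)) *m D *m (delta_mx j 0 : 'M[K]_(n, 1))) 0 0 = D i j.
Proof. by rewrite -rowE -colE !mxE. Qed.

Lemma de_small n : (n != 5)%N -> (n != 6)%N -> de K n = 0.
Proof. by rewrite /de => /negPf -> /negPf ->. Qed.

Lemma brkE (X Y : 'cV[K]_6) k : brk X Y k 0 = - (X^T *m de K k.+1 *m Y) 0 0.
Proof. by rewrite /brk mxE. Qed.

Lemma d1S (a : 'rV[K]_6) : d1 a = \sum_k a 0 k *: de K k.+1.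
Proof.
apply/matrixP => i j; rewrite summxE /d1 mxE mxE -sumrN.
apply: eq_bigr => k _; rewrite brkE trmx_delta dquad mxE; ring.
Qed.

Definition o4 : 'I_6 := Ordinal (isT : (4 < 6)%N).
Definition o5 : 'I_6 := Ordinal (isT : (5 < 6)%N).

Lemma d1E (a : 'rV[K]_6) : d1 a = a 0 o4 *: de K 5 + a 0 o5 *: de K 6.
Proof.
rewrite d1S !big_ord_recl big_ord0 /bump /= (@de_small 1) // (@de_small 2) // (@de_small 3) // (@de_small 4) // !scaler0 !add0r addr0.
by congr (a 0 _ *: _ + a 0 _ *: _); apply: val_inj.
Qed.

Lemma d1Z c (a : 'rV[K]_6) : d1 (c *: a) = c *: d1 a.
Proof. by rewrite !d1E !scE [RHS]scalerDr !scalerA. Qed.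

Lemma alpha_brk (al : 'rV[K]_6) (X Y : 'cV[K]_6) :
  (al *m brk X Y) 0 0 = - (X^T *m d1 al *m Y) 0 0.
Proof.
rewrite d1S mulmx_sumr mulmx_suml summxE mxE -sumrN.
apply: eq_bigr => k _; rewrite brkE -scalemxAr -scalemxAl scE; ring.
Qed.

Lemma map_wedge (K' : comNzRingType) (f : {rmorphism K -> K'}) (a b : 'rV[K]_6) :
  map_mx f (wedge a b) = wedge (map_mx f a) (map_mx f b).
Proof. by rewrite /wedge map_mxB !map_mxM !map_trmx. Qed.

Lemma map_de (K' : comNzRingType) (f : {rmorphism K -> K'}) n :
  map_mx f (de K n) = de K' n.
Proof.
rewrite /de; case: ifP => _; first by rewrite map_mxD !map_wedge /ef !map_delta_mx.
case: ifP => _; first by rewrite map_mxD !map_wedge /ef !map_delta_mx.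
by rewrite map_mx0.
Qed.

Lemma de5E p q : de K 5 p q =
  (p == 0%N :> nat)%:R * (q == 2%N :> nat)%:R - (p == 2%N :> nat)%:R * (q == 0%N :> nat)%:R
  + ((p == 3%N :> nat)%:R * (q == 1%N :> nat)%:R - (p == 1%N :> nat)%:R * (q == 3%N :> nat)%:R).
Proof. by rewrite /de /= adE !wedgeE !efE. Qed.
Lemma de6E p q : de K 6 p q =
  (p == 0%N :> nat)%:R * (q == 3%N :> nat)%:R - (p == 3%N :> nat)%:R * (q == 0%N :> nat)%:R
  + ((p == 1%N :> nat)%:R * (q == 2%N :> nat)%:R - (p == 2%N :> nat)%:R * (q == 1%N :> nat)%:R).
Proof. by rewrite /de /= adE !wedgeE !efE. Qed.
Lemma Wgen (j : K) : j * j = -1 ->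
  de K 5 + j *: de K 6 = wedge (ef K 1 + j *: ef K 2) (ef K 3 + j *: ef K 4).
Proof.
move=> hj; apply/matrixP => p q.
rewrite adE scE de5E de6E wedgeE !adE !scE !efE //.
ring: hj.
Qed.
End Gen.


Section Cx.
Variable R : realType.
Local Notation C := R[i].
Lemma iCi : iC R * iC R = -1.
Proof. by apply/eqP; rewrite eq_complex /=; simpc. Qed.
Lemma conj_iC : conjc (iC R) = - iC R.
Proof. by apply/eqP; rewrite eq_complex /=; simpc. Qed.
Lemma conjc_nat (n : nat) : conjc (n%:R : C) = n%:R.
Proof. exact: rmorph_nat. Qed.
Lemma cD (x y : C) : conjc (x + y) = conjc x + conjc y. Proof. exact: rmorphD. Qed.
Lemma cB (x y : C) : conjc (x - y) = conjc x - conjc y. Proof. exact: rmorphB. Qed.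
Lemma cM (x y : C) : conjc (x * y) = conjc x * conjc y. Proof. exact: rmorphM. Qed.
Lemma cN (x : C) : conjc (- x) = - conjc x. Proof. exact: rmorphN. Qed.
Lemma cK (x : C) : conjc (conjc x) = x. Proof. exact: conjcK. Qed.
Lemma cfE m n (A : 'M[C]_(m, n)) i j : conjf A i j = conjc (A i j).
Proof. by rewrite mxE. Qed.

Lemma om1E k : om1 R 0 k = (k == 0%N :> nat)%:R + iC R * (k == 1%N :> nat)%:R.
Proof. by rewrite /om1 adE scE !efE. Qed.
Lemma om2E k : om2 R 0 k = (k == 2%N :> nat)%:R + iC R * (k == 3%N :> nat)%:R.
Proof. by rewrite /om2 adE scE !efE. Qed.
Lemma om3E k : om3 R 0 k = (k == 4%N :> nat)%:R + iC R * (k == 5%N :> nat)%:R.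
Proof. by rewrite /om3 adE scE !efE. Qed.
Lemma com1E k : conjf (om1 R) 0 k = (k == 0%N :> nat)%:R - iC R * (k == 1%N :> nat)%:R.
Proof. by rewrite cfE om1E cD cM conj_iC !conjc_nat mulNr. Qed.
Lemma com2E k : conjf (om2 R) 0 k = (k == 2%N :> nat)%:R - iC R * (k == 3%N :> nat)%:R.
Proof. by rewrite cfE om2E cD cM conj_iC !conjc_nat mulNr. Qed.
Lemma com3E k : conjf (om3 R) 0 k = (k == 4%N :> nat)%:R - iC R * (k == 5%N :> nat)%:R.
Proof. by rewrite cfE om3E cD cM conj_iC !conjc_nat mulNr. Qed.

Lemma etaE (i : 'I_3) k : Defs.eta R i 0 k =
  if (i : nat) == 0%N then (k == 0%N :> nat)%:R + iC R * (k == 1%N :> nat)%:R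
  else if (i : nat) == 1%N then (k == 2%N :> nat)%:R - iC R * (k == 3%N :> nat)%:R
  else (k == 4%N :> nat)%:R - iC R * (k == 5%N :> nat)%:R.
Proof.
rewrite /Defs.eta; case: ifP => _; first exact: om1E.
by case: ifP => _; [exact: com2E | exact: com3E].
Qed.

Lemma etaCE (i : 'I_3) k : conjc (Defs.eta R i 0 k) =
  if (i : nat) == 0%N then (k == 0%N :> nat)%:R - iC R * (k == 1%N :> nat)%:R
  else if (i : nat) == 1%N then (k == 2%N :> nat)%:R + iC R * (k == 3%N :> nat)%:R
  else (k == 4%N :> nat)%:R + iC R * (k == 5%N :> nat)%:R.
Proof.
rewrite etaE; case: ifP => _; last case: ifP => _;
by rewrite ?cD ?cB ?cN ?cM conj_iC !conjc_nat ?mulNr ?opprK.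
Qed.

Lemma I1 : B10 R *m (B01 R)^T = 2%:M.
Proof.
apply/matrixP => i j; rewrite !mxE.
rewrite !big_ord_recl big_ord0 !mxE !etaCE !etaE.
case: i => [[|[|[|i]]] hi] //=; case: j => [[|[|[|j]]] hj] //=; ring: iCi.
Qed.

Lemma I2 : B10 R *m (B10 R)^T = 0.
Proof.
apply/matrixP => i j; rewrite !mxE.
rewrite !big_ord_recl big_ord0 !mxE !etaE.
case: i => [[|[|[|i]]] hi] //=; case: j => [[|[|[|j]]] hj] //=; ring: iCi.
Qed.

Lemma I3 : B01 R *m (B01 R)^T = 0.
Proof. by rewrite /B01 /conjf map_trmx -map_mxM I2 map_mx0. Qed.

Lemma I4 : B01 R *m (B10 R)^T = 2%:M.
Proof. by rewrite -(trmxK (B01 R *m _)) trmx_mul trmxK I1 tr_scalar_mx. Qed.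

Lemma om1q : om1 R = ef C 1 + iC R *: ef C 2.
Proof. by []. Qed.
Lemma om2q : om2 R = ef C 3 + iC R *: ef C 4.
Proof. by []. Qed.
Lemma W1 : de C 5 + iC R *: de C 6 = wedge (om1 R) (om2 R).
Proof. rewrite om1q om2q; exact: (Wgen _ _ iCi). Qed.

Lemma mCi : (- iC R) * (- iC R) = -1.
Proof. by rewrite mulrNN iCi. Qed.

Lemma com1 : conjf (om1 R) = ef C 1 + (- iC R) *: ef C 2.
Proof. apply/matrixP => p q; rewrite ord1 com1E adE scE !efE //; ring. Qed.
Lemma com2 : conjf (om2 R) = ef C 3 + (- iC R) *: ef C 4.
Proof. apply/matrixP => p q; rewrite ord1 com2E adE scE !efE //; ring. Qed.

Lemma W2 : de C 5 - iC R *: de C 6 = wedge (conjf (om1 R)) (conjf (om2 R)).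
Proof. by rewrite com1 com2 -scaleNr; exact: (Wgen _ _ mCi). Qed.
End Cx.


Section P1.
Variable R : realType.
Local Notation C := R[i].

Lemma two_neq0 : (2%:R : C) != 0.
Proof. by rewrite pnatr_eq0. Qed.

Lemma cap0 : (<<B10 R>> :&: <<B01 R>> = 0)%MS.
Proof.
apply/eqP; rewrite -submx0.
move: (capmxSl <<B10 R>> <<B01 R>>)%MS (capmxSr <<B10 R>> <<B01 R>>)%MS.
rewrite !genmxE; move: (_ :&: _)%MS => X h1 h2.
have [s hs] := submxP h1; have [r hr] := submxP h2.
have : X *m (B01 R)^T = 0 by rewrite hr -mulmxA I3 mulmx0.
rewrite hs -mulmxA I1 mul_mx_scalar => /eqP; rewrite scaler_eq0 (negPf two_neq0) /= => /eqP s0.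
by rewrite s0 mul0mx submx_refl.
Qed.

Lemma cap0' : (<<B01 R>> :&: <<B10 R>> = 0)%MS.
Proof. by rewrite capmxC cap0. Qed.

Lemma P10_id m (u : 'M[C]_(m, 6)) : (u <= B10 R)%MS -> u *m P10 R = u.
Proof. by move=> h; apply: proj_mx_id cap0 _; rewrite genmxE. Qed.
Lemma P01_0 m (u : 'M[C]_(m, 6)) : (u <= B10 R)%MS -> u *m P01 R = 0.
Proof. by move=> h; apply: proj_mx_0 cap0' _; rewrite genmxE. Qed.
Lemma P10_0 m (u : 'M[C]_(m, 6)) : (u <= B01 R)%MS -> u *m P10 R = 0.
Proof. by move=> h; apply: proj_mx_0 cap0 _; rewrite genmxE. Qed.
Lemma P01_id m (u : 'M[C]_(m, 6)) : (u <= B01 R)%MS -> u *m P01 R = u.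
Proof. by move=> h; apply: proj_mx_id cap0' _; rewrite genmxE. Qed.

Lemma rf : row_free (B10 R).
Proof.
apply/row_freeP; exists ((2%:R)^-1 *: (B01 R)^T).
by rewrite -scalemxAr I1 scale_scalar_mx mulVf // two_neq0.
Qed.

Lemma om1_sub : (om1 R <= B10 R)%MS.
Proof. have -> : om1 R = row 0 (B10 R) by rewrite /B10 rowK. exact: row_sub. Qed.
Lemma com2_sub : (conjf (om2 R) <= B10 R)%MS.
Proof. have -> : conjf (om2 R) = row 1 (B10 R) by rewrite /B10 rowK. exact: row_sub. Qed.
Lemma com1_sub : (conjf (om1 R) <= B01 R)%MS.
Proof. by rewrite /conjf /B01 /conjf map_submx om1_sub. Qed.

Lemma B10_sum (s : 'rV[C]_3) :
  s *m B10 R = s 0 0 *: om1 R + s 0 1 *: conjf (om2 R) + s 0 2%:R *: conjf (om3 R).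
Proof.
rewrite mulmx_sum_row !big_ord_recl big_ord0 addr0 !rowK addrA.
by congr (s 0 _ *: _ + s 0 _ *: _ + s 0 _ *: _); apply: val_inj. Qed.

End P1.


Section P1b.
Variable R : realType.
Local Notation C := R[i].
Lemma B10E j k : B10 R j k = Defs.eta R j 0 k.
Proof. by rewrite mxE. Qed.
Lemma d1_B10 (s : 'rV[C]_3) :
  d1 (s *m B10 R) = s 0 2%:R *: wedge (conjf (om1 R)) (conjf (om2 R)).
Proof.
have e4 : (s *m B10 R) 0 o4 = s 0 2%:R.
  rewrite mxE; under eq_bigr => j _ do rewrite B10E etaE.
  rewrite !big_ord_recl big_ord0 /o4 /=.
  have -> : lift ord0 (lift ord0 ord0) = 2%:R :> 'I_3 by apply: val_inj.
  ring.
have e5 : (s *m B10 R) 0 o5 = - (s 0 2%:R * iC R).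
  rewrite mxE; under eq_bigr => j _ do rewrite B10E etaE.
  rewrite !big_ord_recl big_ord0 /o5 /=.
  have -> : lift ord0 (lift ord0 ord0) = 2%:R :> 'I_3 by apply: val_inj.
  ring.
rewrite d1E e4 e5 -W2 scalerBr scalerA scaleNr.
by [].
Qed.

Lemma d1_om3 : d1 (om3 R) = wedge (om1 R) (om2 R).
Proof.
rewrite d1E !om3E /o4 /o5 /= -W1.
by rewrite mulr0 addr0 scale1r mulr1 add0r.
Qed.

Lemma Th_mul (u : 'rV[C]_3) : u *m (\matrix_(i<3) theta0 R i) = u 0 0 *: om3 R.
Proof.
rewrite mulmx_sum_row !big_ord_recl big_ord0 !rowK /theta0 /= !scaler0 !addr0.
by congr (u 0 _ *: _); apply: val_inj.
Qed.
Lemma linA (T A B X : 'M[C]_6) x :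
  T^T *m (A^T *m (x *: X) *m B) + (B^T *m (x *: X) *m A) *m T =
  x *: (T^T *m (A^T *m X *m B) + (B^T *m X *m A) *m T).
Proof. by rewrite -!scalemxAr -!scalemxAl -scalemxAr scalerDr. Qed.
Lemma linB (A B X : 'M[C]_6) x :
  A^T *m (x *: X) *m B + B^T *m (x *: X) *m A =
  x *: (A^T *m X *m B + B^T *m X *m A).
Proof. by rewrite -!scalemxAr -!scalemxAl scalerDr. Qed.
Lemma linC (A X : 'M[C]_6) x :
  A^T *m (x *: X) *m A = x *: (A^T *m X *m A).
Proof. by rewrite -!scalemxAr -!scalemxAl. Qed.

Lemma c02gen (Q : 'M[C]_6) (u v : 'rV[C]_6) : u *m Q = 0 -> Q^T *m wedge u v *m Q = 0.
Proof. by move=> h; rewrite tw h trmx0 mul0mx mulmx0 subrr. Qed.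
Lemma c11gen (P Q : 'M[C]_6) (u v : 'rV[C]_6) : u *m P = 0 -> v *m Q = 0 -> u *m Q = u -> v *m P = v ->
  P^T *m wedge u v *m Q + Q^T *m wedge u v *m P = wedge u v.
Proof.
move=> h1 h2 h3 h4; rewrite !tw h1 h2 h3 h4 trmx0 !mul0mx ?mulmx0 sub0r subr0 addrC.
by rewrite /wedge.
Qed.
Lemma t11gen (T P Q : 'M[C]_6) (u v : 'rV[C]_6) : u *m P = 0 -> v *m Q = 0 -> u *m Q = u -> v *m P = v ->
  v *m T = 0 ->
  T^T *m (P^T *m wedge u v *m Q) + (Q^T *m wedge u v *m P) *m T = 0.
Proof.
move=> h1 h2 h3 h4 h5; rewrite !tw h1 h2 h3 h4 trmx0 !mul0mx ?mulmx0 sub0r subr0.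
by rewrite mulmxN mulmxA -trmx_mul h5 trmx0 mul0mx oppr0 add0r -mulmxA h5 mulmx0.
Qed.
Lemma mA3 m (a : 'M[C]_(m,6)) (P : 'M[C]_6) (Q : 'M[C]_(6,3)) (T : 'M[C]_(3,6)) :
  a *m (P *m Q *m T) = a *m P *m Q *m T.
Proof. by rewrite !mulmxA. Qed.
Lemma thmxE th : thmx th = P10 R *m pinvmx (B10 R) *m \matrix_(i<3) th i.
Proof. by []. Qed.
Lemma B10row i : row i (B10 R) = Defs.eta R i.
Proof. by rewrite /B10 rowK. Qed.

Opaque pinvmx proj_mx wedge thmx P10 P01 B10 B01 d1 de.

Lemma theta11Z th x (X : 'M[C]_6) : theta11 th (x *: X) = x *: theta11 th X.
Proof. exact: linA. Qed.
Lemma comp11Z x (X : 'M[C]_6) : comp11 (x *: X) = x *: comp11 X.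
Proof. exact: linB. Qed.
Lemma comp02Z x (X : 'M[C]_6) : comp02 (x *: X) = x *: comp02 X.
Proof. exact: linC. Qed.

Lemma part1 (a : 'rV[C]_6) : (a <= B10 R)%MS -> dbar_hom (theta0 R) a = 0.
Proof.
move=> ha.
have [s hs] := submxP ha.
have hu : (conjf (om1 R) <= B01 R)%MS := com1_sub R.
have hv : (conjf (om2 R) <= B10 R)%MS := com2_sub R.
have vth : conjf (om2 R) *m thmx (theta0 R) = 0.
  rewrite thmxE mA3 P10_id //.
  have -> : conjf (om2 R) = delta_mx 0 1 *m B10 R by rewrite -rowE B10row.
  rewrite -(mulmxA (delta_mx 0 1)) mulmxVp ?rf // mulmx1 Th_mul mxE /=.
  by rewrite scale0r.
have ath : a *m thmx (theta0 R) = (a *m pinvmx (B10 R)) 0 0 *: om3 R.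
  by rewrite thmxE mA3 P10_id // Th_mul.
rewrite /dbar_hom /dbar01 /dbar10 ath d1Z d1_om3 hs d1_B10 comp02Z comp11Z theta11Z.
have c02 : comp02 (wedge (om1 R) (om2 R)) = 0.
  exact: (c02gen _ _ _ (@P01_0 R _ _ (om1_sub R))).
have c11 : comp11 (wedge (conjf (om1 R)) (conjf (om2 R))) = wedge (conjf (om1 R)) (conjf (om2 R)).
  exact: (c11gen _ _ _ _ (@P10_0 R _ _ hu) (@P01_0 R _ _ hv) (@P01_id R _ _ hu) (@P10_id R _ _ hv)).
have t11 : theta11 (theta0 R) (wedge (conjf (om1 R)) (conjf (om2 R))) = 0.
  exact: (t11gen _ _ _ _ _ (@P10_0 R _ _ hu) (@P01_0 R _ _ hv) (@P01_id R _ _ hu) (@P10_id R _ _ hv) vth).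
by rewrite c02 c11 t11 !scaler0 subrr.
Qed.
End P1b.

Transparent pinvmx proj_mx wedge thmx P10 P01 B10 B01 d1 de.


Section G2.
Variable K : comNzRingType.
Implicit Types X Y : 'cV[K]_6.
Lemma brkDl X1 X2 Y : brk (X1 + X2) Y = brk X1 Y + brk X2 Y.
Proof. apply/matrixP => k l; rewrite ord1 adE !brkE linearD /= !mulmxDl adE opprD. by []. Qed.
Lemma brkZl c X Y : brk (c *: X) Y = c *: brk X Y.
Proof. apply/matrixP => k l; rewrite ord1 scE !brkE linearZ /= -!scalemxAl scE mulrN. by []. Qed.
Lemma brkDr X Y1 Y2 : brk X (Y1 + Y2) = brk X Y1 + brk X Y2.
Proof. apply/matrixP => k l; rewrite ord1 adE !brkE mulmxDr adE opprD. by []. Qed.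
Lemma brkZr c X Y : brk X (c *: Y) = c *: brk X Y.
Proof. apply/matrixP => k l; rewrite ord1 scE !brkE -scalemxAr scE mulrN. by []. Qed.
End G2.

Section P2.
Variable R : realType.
Local Notation C := R[i].
Local Notation cR := (map_mx (real_complex R)).

Lemma cdecomp m n (Z : 'M[C]_(m, n)) : Z = cR (map_mx (@complex.Re R) Z) + iC R *: cR (map_mx (@complex.Im R) Z).
Proof.
apply/matrixP => i j; rewrite adE scE !mxE.
case: (Z i j) => a b; apply/eqP; rewrite eq_complex /=.
apply/andP; split; apply/eqP; simpc; ring.
Qed.

Lemma cuniq m n (a b c d : 'M[R]_(m, n)) :
  cR a + iC R *: cR b = cR c + iC R *: cR d -> a = c /\ b = d.
Proof.
move/matrixP => h; split; apply/matrixP => i j; have := h i j;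
rewrite !adE !scE !mxE => /eqP; rewrite eq_complex /= => /andP [/eqP e1 /eqP e2].
  by move: e1; simpc; lra.
by move: e2; simpc; lra.
Qed.

Lemma brk_cR (X Y : 'cV[R]_6) : brk (cR X) (cR Y) = cR (brk X Y).
Proof.
apply/matrixP => k l; rewrite ord1 [RHS]mxE !brkE rmorphN.
by rewrite -(map_de _ _ (real_complex R)) map_trmx -!map_mxM mxE.
Qed.

Opaque brk.

Lemma fD (al : 'rV[C]_6) (A B : 'cV[C]_6) : (al *m (A + B)) 0 0 = (al *m A) 0 0 + (al *m B) 0 0.
Proof. by rewrite mulmxDr adE. Qed.
Lemma fZ (al : 'rV[C]_6) c (A : 'cV[C]_6) : (al *m (c *: A)) 0 0 = c * (al *m A) 0 0.
Proof. by rewrite -scalemxAr scE. Qed.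

Lemma real_form (J : 'M[R]_6) (Z : 'cV[C]_6) : cR J *m Z = - iC R *: Z ->
  exists x, Z = cR x + iC R *: cR (J *m x).
Proof.
move=> h.
set x := map_mx (@complex.Re R) Z; set x' := map_mx (@complex.Im R) Z.
have e : Z = cR x + iC R *: cR x' := cdecomp _ _ Z.
exists x.
suff -> : J *m x = x' by exact: e.
rewrite e in h.
rewrite mulmxDr -scalemxAr -!map_mxM scalerDr scalerA mulNr iCi opprK scale1r in h.
have h2 : cR (J *m x) + iC R *: cR (J *m x') = cR x' + iC R *: cR (- x).
  by rewrite h map_mxN scalerN -scaleNr addrC.
by case/cuniq: h2.
Qed.

Lemma alg (A B Cc D : C) : D = A + iC R * Cc + iC R * B ->
  A + iC R * B + iC R * (Cc + iC R * D) = 0.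
Proof. move=> ->; ring: (iCi R). Qed.

Lemma nij_scalar (J : 'M[R]_6)
  (hN : forall X Y : 'cV[R]_6,
     brk (J *m X) (J *m Y) = brk X Y + J *m brk (J *m X) Y + J *m brk X (J *m Y))
  (al : 'rV[C]_6) (hal : al *m cR J = iC R *: al)
  (Z W : 'cV[C]_6) (hZ : cR J *m Z = - iC R *: Z) (hW : cR J *m W = - iC R *: W) :
  (al *m brk Z W) 0 0 = 0.
Proof.
have [x ->] := real_form _ _ hZ; have [y ->] := real_form _ _ hW.
have key : (al *m brk (cR (J *m x)) (cR (J *m y))) 0 0 =
   (al *m brk (cR x) (cR y)) 0 0 + iC R * (al *m brk (cR (J *m x)) (cR y)) 0 0
   + iC R * (al *m brk (cR x) (cR (J *m y))) 0 0.
  rewrite !brk_cR hN !map_mxD !map_mxM !mulmxDr !mulmxA hal -!scalemxAl !adE !scE.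
  by [].
rewrite brkDl brkZl !brkDr !brkZr !fD !fZ fD fZ.
apply: alg; exact: key.
Qed.

Lemma rowEnt m n (A : 'M[C]_(m, n)) k j : (row k A) 0 j = A k j.
Proof. by rewrite mxE. Qed.

Lemma eig (J : 'M[R]_6) (hJ2 : J *m J = -1%:M) (M : 'M[C]_(3, 6))
  (hform : forall a : 'rV[C]_6, (a *m cR J == iC R *: a) = (a <= M)%MS)
  (Z : 'cV[C]_6) (hMZ : M *m Z = 0) : cR J *m Z = - iC R *: Z.
Proof.
have Jc2 : cR J *m cR J = -1%:M by rewrite -map_mxM hJ2 map_mxN map_mx1.
have hMJ : M *m cR J = iC R *: M.
  apply/row_matrixP => i; rewrite row_mul linearZ /=; apply/eqP; rewrite hform row_sub.
  by [].
pose Z' := cR J *m Z + iC R *: Z.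
have JZ' : cR J *m Z' = iC R *: Z'.
  rewrite /Z' mulmxDr mulmxA Jc2 mulNmx mul1mx -scalemxAr scalerDr scalerA iCi scaleN1r addrC.
  by [].
have MZ' : M *m Z' = 0.
  by rewrite /Z' mulmxDr mulmxA hMJ -scalemxAl -scalemxAr hMZ scaler0 addr0.
have Z'0 : Z' = 0.
  apply/matrixP => k l; rewrite ord1 [RHS]mxE.
  pose be := (delta_mx 0 k : 'rV[C]_6).
  pose a := be - iC R *: (be *m cR J).
  have ha : (a <= M)%MS.
    rewrite -hform /a; apply/eqP.
    rewrite mulmxBl -scalemxAl -mulmxA Jc2 mulmxN mulmx1 scalerN opprK scalerBr scalerA iCi scaleN1r opprK addrC.
    by [].
  have [D hD] := submxP ha.
  have : a *m Z' = 0 by rewrite hD -mulmxA MZ' mulmx0.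
  rewrite /a mulmxBl -scalemxAl -mulmxA JZ' -scalemxAr scalerA iCi scaleN1r opprK.
  move/matrixP/(_ 0 0); rewrite adE /be -rowE rowEnt [RHS]mxE => h.
  move: h; rewrite -mulr2n -mulr_natl => /eqP; rewrite mulf_eq0 (negPf (two_neq0 R)) /=.
  by move/eqP.
move/eqP: Z'0; rewrite /Z' addr_eq0 => /eqP ->.
by rewrite scaleNr.
Qed.
End P2.

Transparent brk.


Definition j1 : 'I_3 := Ordinal (isT : (1 < 3)%N).
Definition j2 : 'I_3 := Ordinal (isT : (2 < 3)%N).

Section G3.
Variable K : comNzRingType.

Lemma sbE m n (A B : 'M[K]_(m, n)) i j : (A - B) i j = A i j - B i j.
Proof. by rewrite !mxE. Qed.
Lemma m11 (u v : 'M[K]_1) : (u^T *m v) 0 0 = u 0 0 * v 0 0.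
Proof. by rewrite mxE big_ord1 mxE. Qed.

Lemma ngE m n (A : 'M[K]_(m, n)) i j : (- A) i j = - A i j.
Proof. by rewrite mxE. Qed.
Lemma colEnt m n (A : 'M[K]_(m, n)) i j : (col j A) i 0 = A i j.
Proof. by rewrite mxE. Qed.
Lemma d11 : (delta_mx j1 0 : 'cV[K]_3) j1 0 = 1.
Proof. by rewrite mxE. Qed.
Lemma d21 : (delta_mx j2 0 : 'cV[K]_3) j1 0 = 0.
Proof. by rewrite mxE. Qed.

Lemma quad11 (Z W : 'cV[K]_6) (a b : 'rV[K]_6) c :
  (Z^T *m (c *: wedge a b) *m W) 0 0 =
  c * ((a *m Z) 0 0 * (b *m W) 0 0 - (b *m Z) 0 0 * (a *m W) 0 0).
Proof. by rewrite -scalemxAr -scalemxAl scE tw sbE !m11. Qed.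

Lemma gMV (A B : 'M[K]_(3, 6)) (Rm : 'M[K]_3) :
  A *m A^T = 0 -> A *m B^T = 2%:M -> B *m A^T = 2%:M -> B *m B^T = 0 ->
  (A + Rm *m B) *m (A^T - B^T *m Rm) = 0.
Proof.
move=> h1 h2 h3 h4.
rewrite mulmxDl !mulmxBr h1 mulmxA h2 -!mulmxA h3 (mulmxA B) h4 mul0mx mulmx0 mul_scalar_mx mul_mx_scalar.
by rewrite sub0r subr0 addNr.
Qed.

Lemma gA (A B : 'M[K]_(3, 6)) (Rm : 'M[K]_3) (c : 'cV[K]_3) :
  A *m A^T = 0 -> A *m B^T = 2%:M ->
  A *m ((A^T - B^T *m Rm) *m c) = - (2%:R *: (Rm *m c)).
Proof.
move=> h1 h2; rewrite mulmxA mulmxBr h1 mulmxA h2 mul_scalar_mx sub0r mulNmx.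
by rewrite -scalemxAl.
Qed.

Lemma gB (A B : 'M[K]_(3, 6)) (Rm : 'M[K]_3) (c : 'cV[K]_3) :
  B *m A^T = 2%:M -> B *m B^T = 0 ->
  B *m ((A^T - B^T *m Rm) *m c) = 2%:R *: c.
Proof.
move=> h3 h4; rewrite mulmxA mulmxBr h3 mulmxA h4 mul0mx subr0.
by rewrite mul_scalar_mx.
Qed.

Lemma gfinal (A B : 'M[K]_(3, 6)) (Rm : 'M[K]_3) (a b : 'rV[K]_6) :
  A *m A^T = 0 -> A *m B^T = 2%:M -> B *m A^T = 2%:M -> B *m B^T = 0 ->
  (forall X : 'cV[K]_6, (a *m X) 0 0 = (A *m X) 0 0) ->
  (forall X : 'cV[K]_6, (b *m X) 0 0 = (B *m X) j1 0) ->
  (((A^T - B^T *m Rm) *m (delta_mx j2 0 : 'cV[K]_3))^T *m (Rm 0 j2 *: wedge a b)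
     *m ((A^T - B^T *m Rm) *m (delta_mx j1 0 : 'cV[K]_3))) 0 0
  = - (2%:R * 2%:R) * Rm 0 j2 * Rm 0 j2.
Proof.
move=> h1 h2 h3 h4 ha hb.
rewrite quad11 !ha !hb !(gA _ _ _ _ h1 h2) !(gB _ _ _ _ h3 h4).
rewrite !ngE !scE -!colE !colEnt d11 d21; ring.
Qed.
End G3.

Section P3.
Variable R : realType.
Local Notation C := R[i].
Local Notation cR := (map_mx (real_complex R)).

Lemma toC_cR m n (A : 'M[R]_(m, n)) : map_mx (@toC R) A = cR A.
Proof. by apply/matrixP => i j; rewrite !mxE. Qed.
Lemma B10E' j k : B10 R j k = Defs.eta R j 0 k.
Proof. by rewrite mxE. Qed.
Lemma B01E j k : B01 R j k = conjc (Defs.eta R j 0 k).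
Proof. by rewrite cfE B10E'. Qed.
Lemma mulE m n p (A : 'M[C]_(m, n)) (B : 'M[C]_(n, p)) i k : (A *m B) i k = \sum_j A i j * B j k.
Proof. by rewrite mxE. Qed.
Lemma B10row' i : row i (B10 R) = Defs.eta R i.
Proof. by rewrite /B10 rowK. Qed.

Lemma B01row1 : row j1 (B01 R) = om2 R.
Proof.
apply/rowP => k; rewrite rowEnt B01E.
have -> : Defs.eta R j1 = conjf (om2 R) by [].
by rewrite cfE cK.
Qed.

Lemma rowmulE m (A : 'M[C]_(m, 6)) i (X : 'cV[C]_6) : (row i A *m X) 0 0 = (A *m X) i 0.
Proof. by rewrite -row_mul rowEnt. Qed.

Lemma ha (X : 'cV[C]_6) : (om1 R *m X) 0 0 = (B10 R *m X) 0 0.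
Proof. have -> : om1 R = row 0 (B10 R) by rewrite B10row'. exact: rowmulE. Qed.
Lemma hb (X : 'cV[C]_6) : (om2 R *m X) 0 0 = (B01 R *m X) j1 0.
Proof. by rewrite -B01row1 rowmulE. Qed.

Lemma RB01_4 (Rm : 'M[C]_3) : (Rm *m B01 R) 0 o4 = Rm 0 j2.
Proof.
rewrite mulE; under eq_bigr => j _ do rewrite B01E etaCE.
rewrite !big_ord_recl big_ord0 /o4 /=.
have -> : lift ord0 (lift ord0 ord0) = j2 by apply: val_inj.
ring.
Qed.
Lemma RB01_5 (Rm : 'M[C]_3) : (Rm *m B01 R) 0 o5 = Rm 0 j2 * iC R.
Proof.
rewrite mulE; under eq_bigr => j _ do rewrite B01E etaCE.
rewrite !big_ord_recl big_ord0 /o5 /=.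
have -> : lift ord0 (lift ord0 ord0) = j2 by apply: val_inj.
ring.
Qed.

Lemma d1al (Rm : 'M[C]_3) :
  d1 (row 0 (B10 R + Rm *m B01 R)) = Rm 0 j2 *: wedge (om1 R) (om2 R).
Proof.
rewrite d1E !rowEnt !adE RB01_4 RB01_5 !B10E' !etaE /o4 /o5 /=.
rewrite -W1 [RHS]scalerDr [in RHS]scalerA.
congr (_ *: _ + _ *: _); ring.
Qed.
End P3.

Import numFieldNormedType.Exports.


Section P4.
Variable R : realType.
Local Notation C := R[i].
Local Notation cR := (map_mx (real_complex R)).

Lemma part2 : ~ tangent_at_J1 (theta0 R).
Proof.
case=> eps [J [tau [sigma [[he h0 hsub hder] [hpath hsig]]]]].
have key : forall t, `|t| < eps -> tau 0 t 0 o4 = 0.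
  move=> t ht.
  have [[hJ2 hN] hf] := hpath t ht.
  pose T := \matrix_(i < 3) tau i t.
  have hT : (T <= B10 R)%MS by apply/row_subP => i; rewrite rowK; exact: hsub.
  have hT' : (conjf T <= B01 R)%MS by rewrite /B01 /conjf map_submx.
  have [Rm hRm] := submxP hT'.
  have hM : \matrix_(i < 3) (Defs.eta R i + conjf (tau i t)) = B10 R + Rm *m B01 R.
    rewrite -hRm; apply/row_matrixP => i; rewrite rowK linearD /= B10row' -map_row rowK.
    by [].
  have hform : forall a : 'rV[C]_6, (a *m cR (J t) == iC R *: a) = (a <= (B10 R + Rm *m B01 R)%R)%MS.
    move=> a; rewrite -toC_cR; have := hf a; rewrite /is_form10 => ->.
    exact: (congr1 (fun M => (a <= M)%MS) hM).
  have hMV : forall c : 'cV[C]_3,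
      (B10 R + Rm *m B01 R) *m (((B10 R)^T - (B01 R)^T *m Rm) *m c) = 0.
    by move=> c; rewrite mulmxA gMV ?mul0mx // ?I1 ?I2 ?I3 ?I4.
  have eZ := @eig R (J t) hJ2 _ hform _ (hMV (delta_mx j2 0)).
  have eW := @eig R (J t) hJ2 _ hform _ (hMV (delta_mx j1 0)).
  have hal : row 0 (B10 R + Rm *m B01 R) *m cR (J t) = iC R *: row 0 (B10 R + Rm *m B01 R).
    by apply/eqP; rewrite hform row_sub.
  have z := @nij_scalar R (J t) hN _ hal _ _ eZ eW.
  rewrite alpha_brk d1al (gfinal _ _ _ _ _ _ (I2 R) (I1 R) (I4 R) (I3 R) (@ha R) (@hb R)) in z.
  move/eqP: z; rewrite oppr_eq0 !mulf_eq0 oppr_eq0 mulf_eq0 (negPf (two_neq0 R)) /= orbb => /eqP r0.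
  have hc : conjf T 0 o4 = 0 by rewrite hRm RB01_4 r0.
  move: hc; rewrite cfE /T mxE => /(congr1 conjc); rewrite cK.
  by move=> ->; rewrite rmorph0.
have [hd _] := hder 0 o4.
have hn : \forall s \near (0:R), complex.Re (tau 0 s 0 o4) = (fun _ => 0 : R) s.
  apply/nbhs_ballP; exists eps => // s /=; rewrite /ball /= sub0r normrN => hs.
  by rewrite key.
have h2 := near_eq_is_derive hn hd.
have := @derive_val _ _ _ _ _ _ _ h2; rewrite derive_cst => hre.
have hs0 : conjf (sigma 0) = om3 R := hsig 0.
have : conjf (sigma 0) 0 o4 = om3 R 0 o4 by rewrite hs0.
rewrite cfE om3E /o4 /= mulr0 addr0 => /(congr1 conjc); rewrite cK rmorph1 => s1.
by move: hre; rewrite s1 /=; move/eqP; rewrite eq_sym oner_eq0.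
Qed.
End P4.

Theorem lemma4p3 (R : realType) :
  (forall a : 'rV[R[i]]_6, (a <= B10 R)%MS -> dbar_hom (theta0 R) a = 0) /\
  ~ tangent_at_J1 (theta0 R).
Proof.
split; [exact: (@part1 R) | exact: (@part2 R)].
Qed.
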